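(* Let $k$ be a positive integer and let $w_{n,k}$ denote the number of words $w_1\cdots w_n$ with all $w_i\in[n]$ containing no strictly decreasing subsequence of length $k+1$. Then for all positive integers $n,m$, $w_{n,k}\cdot w_{m,k}\le w_{n+m,k}$.
   Context: $[n]=\{1,\dots,n\}$. *)

(* Defs.v *)
From mathcomp Require Import all_boot.
Set Implicit Arguments. Unset Strict Implicit. Unset Printing Implicit Defensive.

(* A word w_1...w_n with letters in [n] is a function 'I_n -> 'I_n
   (position i and letter value shifted by one: letter j : 'I_n stands for j+1). *)

Definition has_dec_subseq (n l : nat) (w : {ffun 'I_n -> 'I_n}) : bool :=
  [exists s : {ffun 'I_l -> 'I_n},
     [forall a : 'I_l, forall b : 'I_l,
        (a < b) ==> ((s a < s b) && (w (s b) < w (s a)))]].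

Definition wnk (n k : nat) : nat :=
  #|[set w : {ffun 'I_n -> 'I_n} | ~~ has_dec_subseq k.+1 w]|.

(* Main.v *)
Require Import Defs.
From mathcomp Require Import all_boot.
From mathcomp Require Import zify.

Section S.
Variables n m : nat.

Definition cat_w (u : {ffun 'I_n -> 'I_n}) (v : {ffun 'I_m -> 'I_m}) :
  {ffun 'I_(n+m) -> 'I_(n+m)} :=
  [ffun i => match split i with inl a => lshift m (u a) | inr b => rshift n (v b) end].

Lemma catL u v (i : 'I_(n+m)) (a : 'I_n) : (i : nat) = a -> (cat_w u v i : nat) = u a.
Proof.
move=> h; rewrite ffunE; case: splitP => j hj /=.
  by have -> : j = a by apply: val_inj; rewrite /= -hj h.
have := ltn_ord a; lia.
Qed.

Lemma catR u v (i : 'I_(n+m)) (b : 'I_m) : (i : nat) = n + b -> (cat_w u v i : nat) = n + v b.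
Proof.
move=> h; rewrite ffunE; case: splitP => j hj /=.
  have := ltn_ord j; lia.
by have -> : j = b by apply: val_inj; rewrite /=; lia.
Qed.

Lemma cat_free l u v : ~~ has_dec_subseq l.+1 u -> ~~ has_dec_subseq l.+1 v ->
  ~~ has_dec_subseq l.+1 (cat_w u v).
Proof.
move=> hu hv; apply/negP => /existsP [s /forallP hs].
have hs' : forall a b : 'I_l.+1, a < b -> (s a < s b) && (cat_w u v (s b) < cat_w u v (s a)).
  by move=> a b ab; have := hs a => /forallP /(_ b) /implyP; apply.
case: (ltnP (s ord0) n) => h0.
  have cl : forall a, s a < n.
    move=> a; case: (posnP a) => [a0|ap].
      by have -> : a = ord0 by apply: val_inj.
    have /andP [_ lt] := hs' ord0 a ap.
    have e0 := catL u v (s ord0) (Ordinal h0) (erefl _).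
    case: (ltnP (s a) n) => // ha.
    have := ltn_ord (s a); move=> hsa.
    have hb : s a - n < m by lia.
    have eq1 : (s a : nat) = n + (Ordinal hb : nat) by rewrite /= subnKC.
    have e1' := catR u v (s a) (Ordinal hb) eq1.
    have := ltn_ord (u (Ordinal h0)); move: lt; rewrite e0 e1' /=; lia.
  move/negP: hu; apply; apply/existsP; exists [ffun a => Ordinal (cl a)].
  apply/forallP => a; apply/forallP => b; apply/implyP => ab.
  have /andP [l1 l2] := hs' a b ab.
  rewrite !ffunE -(catL u v (s a) (Ordinal (cl a))) // -(catL u v (s b) (Ordinal (cl b))) //.
  by rewrite /= l1.
have cl : forall a, n <= s a.
  move=> a; case: (posnP a) => [a0|ap].
    by have -> : a = ord0 by apply: val_inj.
  have /andP [lt _] := hs' ord0 a ap; lia.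
have cl2 : forall a, s a - n < m by move=> a; have := ltn_ord (s a); have := cl a; lia.
move/negP: hv; apply; apply/existsP; exists [ffun a => Ordinal (cl2 a)].
apply/forallP => a; apply/forallP => b; apply/implyP => ab.
have /andP [l1 l2] := hs' a b ab.
have eqa : (s a : nat) = n + (Ordinal (cl2 a) : nat) by rewrite /= subnKC.
have eqb : (s b : nat) = n + (Ordinal (cl2 b) : nat) by rewrite /= subnKC.
have ea := catR u v (s a) (Ordinal (cl2 a)) eqa.
have eb := catR u v (s b) (Ordinal (cl2 b)) eqb.
rewrite !ffunE /=.
have := cl a; have := cl b; move: l1 l2; rewrite ea eb /=; lia.
Qed.

End S.

Theorem lemma3p5 (k n m : nat) : 0 < k -> 0 < n -> 0 < m ->
  wnk n k * wnk m k <= wnk (n + m) k.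
Proof.
move=> _ _ _; rewrite /wnk -cardsX.
set A := setX _ _.
have inj : injective (fun p : {ffun 'I_n -> 'I_n} * {ffun 'I_m -> 'I_m} => @cat_w n m p.1 p.2).
  move=> [u v] [u' v'] /= e; congr pair; apply/ffunP => a; apply: ord_inj.
    by rewrite -(@catL n m u v (lshift m a) a) // -(@catL n m u' v' (lshift m a) a) // e.
  have h1 := @catR n m u v (rshift n a) a (erefl _).
  have h2 := @catR n m u' v' (rshift n a) a (erefl _).
  move: h1 h2; rewrite e => -> /addnI. done.
rewrite -(card_imset _ inj); apply: subset_leq_card.
apply/subsetP => w /imsetP [[u v]]; rewrite inE /= !inE => /andP [hu hv] ->.
exact: cat_free.
Qed.
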